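(* Let $K=\mathbb{Z}/3$ and let $G$ be a simple graph with edges $e_1,\dots,e_s$ ($s\ge 1$). Then the set $\mathcal{T}\cup\mathcal{E}\cup\{t_s^2\}$ is a Gröbner basis of the ideal $(I(X),t_s^2)\subseteq S=K[t_1,\dots,t_s]$ with respect to the graded reverse lexicographic order on $S$ (with $t_1>t_2>\dots>t_s$).
   Context: Let $G$ be a simple graph with vertex set $\{1,\dots,n\}$ and a fixed ordering $e_1,\dots,e_s$ of its edges, $s\ge1$; edge $e_k$ is identified with the variable $t_k$ of $S=K[t_1,\dots,t_s]$. For a finite field $K$, let $X\subseteq\mathbb{P}^{s-1}$ be the image of the projective torus $\{(x_1:\dots:x_n): x_i\neq0 \ \forall i\}\subseteq\mathbb{P}^{n-1}$ under the map whose $k$-th coordinate is $x_ix_j$ when $e_k=\{i,j\}$ (the projective algebraic toric set parameterized by the edges of $G$). $I(X)\subseteq S$ is the ideal generated by the homogeneous polynomials vanishing on all points of $X$. For $\alpha\in\mathbb{N}^s$ write $t^\alpha=t_1^{\alpha_1}\cdots t_s^{\alpha_s}$. An Eulerian subgraph is a subgraph in which every vertex has even degree. A binomial $t^\alpha-t^\beta$ is an Eulerian binomial if $t^\alpha,t^\beta$ are relatively prime, square-free, of the same degree, and the edges $\{e_i: i\in\operatorname{supp}(\alpha)\cup\operatorname{supp}(\beta)\}$ form an Eulerian subgraph of $G$. $\mathcal{E}$ denotes the set of all Eulerian binomials and $\mathcal{T}=\{t_i^2-t_j^2: 1\le i,j\le s\}$. *)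

(* Defs.v *)
From mathcomp Require Import all_boot all_order all_algebra.
From mathcomp Require Import mpoly.
Set Implicit Arguments. Unset Strict Implicit. Unset Printing Implicit Defensive.
Import GRing.Theory.
Local Open Scope ring_scope.

Section Defs.
Variable (s : nat) (R : ringType).
Local Notation poly := {mpoly R[s]}.

Definition ideal_gen (P : poly -> Prop) (f : poly) : Prop :=
  exists (k : nat) (c g : 'I_k -> poly),
    (forall i, P (g i)) /\ f = \sum_(i < k) c i * g i.

Definition homogeneous (p : poly) : Prop :=
  exists d : nat, forall m, m \in msupp p -> mdeg m = d.

Definition grevlex_lt (a b : 'X_{1..s}) : bool :=
  (mdeg a < mdeg b)%N ||
  ((mdeg a == mdeg b) &&
   [exists k : 'I_s, (b k < a k)%N &&
      [forall j : 'I_s, (k < j)%N ==> (a j == b j)]]).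

(* Leading monomial of p w.r.t. grevlex (0 if p = 0). *)
Definition grevlex_lm (p : poly) : 'X_{1..s} :=
  foldr (fun m acc => if grevlex_lt acc m then m else acc) 0%MM (msupp p).

Definition grevlex_groebner (B I : poly -> Prop) : Prop :=
  (forall g, B g -> I g) /\
  (forall f, I f -> f != 0 ->
     exists g, [/\ B g, g != 0 & (grevlex_lm g <= grevlex_lm f)%MM]).

End Defs.

Definition last_var (s : nat) (hs : (0 < s)%N) : 'I_s :=
  Ordinal (etrans (ltn_predL s) hs).

Section Graph.
(* A simple graph on the vertex set 'I_n (= {1..n}) with the edges listed in
   a fixed order e_0, ..., e_(s-1): each edge is a 2-element vertex set, and
   the listing is injective (no repeated edge). *)
Variables (n s : nat) (E : 'I_s -> {set 'I_n}).
Local Notation poly := {mpoly 'F_3[s]}.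

Definition simple_graph_edges : Prop :=
  injective E /\ forall k, #|E k| = 2%N.

(* The point of X (a representative in K^s) parameterized by x in the torus:
   its k-th coordinate is x_i x_j where e_k = {i, j}. *)
Definition toric_point (x : 'I_n -> 'F_3) : 'I_s -> 'F_3 :=
  fun k => \prod_(i in E k) x i.

Definition vanishes_on_X (f : poly) : Prop :=
  homogeneous f /\
  forall x : 'I_n -> 'F_3, (forall i, x i != 0) -> f.@[toric_point x] = 0.

Definition IX : poly -> Prop := ideal_gen vanishes_on_X.

Definition T_set (f : poly) : Prop :=
  exists i j : 'I_s, f = 'X_i ^+ 2 - 'X_j ^+ 2.

Definition eulerian_binomial (f : poly) : Prop :=
  exists a b : 'X_{1..s},
    [/\ f = 'X_[a] - 'X_[b],
        forall i, minn (a i) (b i) = 0%N,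
        forall i, (a i <= 1)%N /\ (b i <= 1)%N,
        mdeg a = mdeg b &
        forall v : 'I_n,
          ~~ odd #|[set k : 'I_s | (0 < a k + b k)%N && (v \in E k)]| ].

End Graph.

(* Main.v *)
Require Import Defs.
From mathcomp Require Import all_boot all_order all_algebra.
From mathcomp Require Import mpoly.
From mathcomp Require Import zify.
From Stdlib Require Import Classical.
Set Implicit Arguments. Unset Strict Implicit. Unset Printing Implicit Defensive.
Import GRing.Theory.
Local Open Scope ring_scope.
Lemma subset_card (T : finType) (S : {set T}) h : (h <= #|S|)%N ->
  exists2 X : {set T}, X \subset S & #|X| = h.
Proof.
elim: h => [|h IH] hS; first by exists set0; rewrite ?sub0set ?cards0.
have [X hX cX] := IH (ltnW hS).
have : (0 < #|S :\: X|)%N by rewrite cardsD (setIidPr hX) cX subn_gt0.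
case/card_gt0P => x; rewrite inE => /andP[xX xS].
exists (x |: X); first by rewrite subUset sub1set xS hX.
by rewrite cardsU1 xX cX.
Qed.

Lemma odd_sum_card (I : finType) (P : pred I) (F : I -> nat) :
  odd (\sum_(k | P k) F k) = odd #|[set k | P k && odd (F k)]|.
Proof.
rewrite -sum1dep_card big_mkcondr /=.
apply: (big_ind2 (fun x y => odd x = odd y)) => //.
  by move=> x1 x2 y1 y2 h1 h2; rewrite !oddD h1 h2.
by move=> k _; case: (odd (F k)) (esym (oddb (odd (F k)))) => //=.
Qed.

Section Comb.
Variables (n s : nat) (E : 'I_s -> {set 'I_n}).
Local Notation Iv v := [set k | v \in E k].

Lemma comb (M A : {set 'I_s}) :
  (forall v, odd #|M :&: Iv v| = odd #|A :&: Iv v|) ->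
  (#|A| <= #|M|)%N -> odd #|A| = odd #|M| ->
  ((#|A| < #|M|)%N \/ (exists2 k : 'I_s, k \in (A :\: M) & (forall j : 'I_s, (k < j)%N -> (j \in A) = (j \in M)))) ->
  exists al be : {set 'I_s}, exists k : 'I_s,
    [/\ al \subset M, [disjoint al & be], #|al| = #|be|,
        (forall v, ~~ odd #|(al :|: be) :&: Iv v|)
        & (k \in be /\ forall j : 'I_s, (k < j)%N -> j \notin al :|: be)].
Proof.
move=> hpar hle hodd hc.
set a0 := M :\: A; set b0 := A :\: M; set C := a0 :|: b0.
have hM : #|M| = (#|M :&: A| + #|a0|)%N by rewrite cardsID.
have hA : #|A| = (#|M :&: A| + #|b0|)%N by rewrite setIC cardsID.
have dab : [disjoint a0 & b0].
  by rewrite -setI_eq0; apply/eqP/setP => k; rewrite /a0 /b0 !inE; case: (k \in M); case: (k \in A).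
have hC : #|C| = (#|a0| + #|b0|)%N by rewrite cardsU (disjoint_setI0 dab) cards0 subn0.
have Ceul v : ~~ odd #|C :&: Iv v|.
  have e1 : #|M :&: Iv v| = (#|(M :&: A) :&: Iv v| + #|a0 :&: Iv v|)%N.
    rewrite -(cardsID A (M :&: Iv v)); congr (_ + _)%N; apply: eq_card => k; rewrite /a0 /b0 !inE;
    by case: (k \in M); case: (k \in A); case: (v \in E k).
  have e2 : #|A :&: Iv v| = (#|(M :&: A) :&: Iv v| + #|b0 :&: Iv v|)%N.
    rewrite -(cardsID M (A :&: Iv v)); congr (_ + _)%N; apply: eq_card => k; rewrite /a0 /b0 !inE;
    by case: (k \in M); case: (k \in A); case: (v \in E k).
  have e3 : #|C :&: Iv v| = (#|a0 :&: Iv v| + #|b0 :&: Iv v|)%N.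
    rewrite setIUl cardsU.
    have -> : a0 :&: Iv v :&: (b0 :&: Iv v) = set0.
      by apply/setP => k; rewrite /a0 /b0 !inE; case: (k \in M); case: (k \in A); rewrite ?andbF.
    by rewrite cards0 subn0.
  move: (hpar v); rewrite e1 e2 e3 !oddD.
  by case: (odd #|(M :&: A) :&: Iv v|); case: (odd #|a0 :&: Iv v|); case: (odd #|b0 :&: Iv v|).
have qp : (#|b0| <= #|a0|)%N by move: hle; rewrite hM hA leq_add2l.
have pqe : odd #|b0| = odd #|a0|.
  by move: hodd; rewrite hM hA !oddD => /(congr1 (addb (odd #|M :&: A|))); rewrite !addKb.
have [k0 k0C] : exists k0, k0 \in C.
  apply/set0Pn; rewrite -card_gt0 hC.
  case: hc => [h|[k hk _]]; first by move: h; rewrite hM hA ltn_add2l; lia.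
  by rewrite addn_gt0; apply/orP; right; apply/card_gt0P; exists k.
case: (@arg_maxnP _ k0 (mem C) (fun k : 'I_s => val k) k0C) => k kC kmax.
have above (j : 'I_s) : (k < j)%N -> j \notin C.
  by move=> hj; apply/negP => H; have hh : (j <= k)%N := kmax j H; rewrite leqNgt hj in hh.
set h := ((#|a0| + #|b0|) %/ 2)%N.
have hpq : (#|a0| + #|b0| = h + h)%N.
  rewrite addnn -muln2 /h divnK //; rewrite dvdn2 oddD pqe addbb //.
have [X [XS Xc Xk]] : exists X : {set 'I_s}, [/\ X \subset a0, #|X| = h & k \notin X].
  case: (boolP (k \in a0)) => ka0.
    have hh : (h <= #|a0 :\ k|)%N.
      have e : #|a0| = (#|a0 :\ k|).+1 by rewrite (cardsD1 k a0) ka0.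
      case: (ltngtP #|b0| #|a0|) => [lt|gt|eq]; first by move: e lt hpq; clearbody h; lia.
        by move: gt; rewrite ltnNge qp.
      exfalso; case: hc => [h1|[k' hk' hj]].
        by move: h1; rewrite hM hA eq ltnn.
      have k'C : k' \in C by rewrite inE hk' orbT.
      have hkk : (k' <= k)%N := kmax _ k'C; move: hkk; rewrite leq_eqVlt => /orP[/eqP e'|lt].
        have ek : k = k' by apply/val_inj; exact: (esym e').
        by move: ka0 hk'; rewrite ek !inE; case: (k' \in M); case: (k' \in A).
      by move: (hj _ lt) ka0; rewrite !inE; case: (k \in M); case: (k \in A).
    have [X hX cX] := subset_card hh.
    exists X; split => //; first by apply: subset_trans hX (subD1set _ _).
    by apply/negP => /(subsetP hX); rewrite !inE eqxx.
  have hh : (h <= #|a0|)%N by lia.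
  have [X hX cX] := subset_card hh.
  by exists X; split => //; apply/negP => /(subsetP hX); rewrite (negbTE ka0).
exists X, (C :\: X), k; split.
- by apply: subset_trans XS _; apply: subsetDl.
- by rewrite -setI_eq0; apply/eqP/setP => j; rewrite !inE; case: (j \in X); rewrite ?andbF.
- have : X \subset C by apply: subset_trans XS (subsetUl _ _).
  by move/setIidPr => e; rewrite cardsD e Xc hC hpq addnK.
- have -> : X :|: C :\: X = C.
    apply/setP => j; rewrite !inE; case: (boolP (j \in X)) => //= jX.
    by move: (subsetP XS j jX); rewrite !inE => ->.
  exact: Ceul.
- split; first by rewrite inE Xk.
  move=> j hj; have := above j hj; apply: contra; rewrite !inE.
  by case/orP => [/(subsetP XS)|/andP[]//]; rewrite /C inE => ->.
Qed.
End Comb.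

Section Order.
Variable s : nat.
Implicit Types a b c : 'X_{1..s}.
Local Notation lt := (@grevlex_lt s).

Lemma glt_irr a : ~~ lt a a.
Proof.
rewrite /grevlex_lt ltnn /=; apply/negP => /andP[_ /existsP[k /andP[]]].
by rewrite ltnn.
Qed.

Lemma glt_sameP a b : mdeg a = mdeg b ->
  reflect (exists k : 'I_s, (b k < a k)%N /\ forall j : 'I_s, (k < j)%N -> a j = b j) (lt a b).
Proof.
move=> e; rewrite /grevlex_lt e ltnn eqxx /=.
apply: (iffP existsP) => [[k /andP[h1 /forallP h2]]|[k [h1 h2]]].
  by exists k; split=> // j hj; apply/eqP; exact: (implyP (h2 j)).
by exists k; rewrite h1; apply/forallP => j; apply/implyP => /h2 ->.
Qed.

Lemma glt_deg a b : lt a b -> (mdeg a <= mdeg b)%N.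
Proof. by case/orP => [/ltnW //|/andP[/eqP -> _]]. Qed.

Lemma glt_trans a b c : lt a b -> lt b c -> lt a c.
Proof.
move=> hab hbc.
have dab := glt_deg hab; have dbc := glt_deg hbc.
case: (ltnP (mdeg a) (mdeg c)) => [h|h]; first by rewrite /grevlex_lt h.
have eab : mdeg a = mdeg b by apply/eqP; rewrite eqn_leq dab (leq_trans dbc h).
have ebc : mdeg b = mdeg c by apply/eqP; rewrite eqn_leq dbc -eab h.
move/(glt_sameP eab): hab => [k1 [h1 h1']].
move/(glt_sameP ebc): hbc => [k2 [h2 h2']].
apply/(glt_sameP (etrans eab ebc)).
case: (ltngtP k1 k2) => [lt12|lt21|/val_inj e12].
- by exists k2; split => [|j hj]; [rewrite h1' | rewrite h1' ?h2' // (ltn_trans lt12)].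
- by exists k1; split => [|j hj]; [rewrite -h2' | rewrite h1' ?h2' // (ltn_trans lt21)].
- subst k2; exists k1; split => [|j hj]; first exact: ltn_trans h2 h1.
  by rewrite h1' ?h2'.
Qed.

Lemma glt_asym a b : lt a b -> ~~ lt b a.
Proof. by move=> h; apply/negP => /(glt_trans h); rewrite (negbTE (glt_irr a)). Qed.

Lemma glt_total a b : a != b -> lt a b || lt b a.
Proof.
move=> nab.
case: (ltngtP (mdeg a) (mdeg b)) => [h|h|e]; first by rewrite /grevlex_lt h.
  by rewrite /grevlex_lt h orbT.
have [k0 hk0] : exists k0 : 'I_s, a k0 != b k0.
  apply/existsP; apply: contraR nab; rewrite negb_exists => /forallP h.
  by apply/eqP/mnmP => i; move: (h i); rewrite negbK => /eqP.
case: (@arg_maxnP _ k0 (fun k : 'I_s => a k != b k) (fun k : 'I_s => val k) hk0) => k hk hmax.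
have hj : forall j : 'I_s, (k < j)%N -> a j = b j.
  move=> j hj; apply/eqP; apply: contraTT hj => /hmax; by rewrite -leqNgt.
case: (ltngtP (a k) (b k)) => [h|h|h]; last by rewrite h eqxx in hk.
  by apply/orP; right; apply/(glt_sameP (esym e)); exists k; split => // j /hj ->.
by apply/orP; left; apply/(glt_sameP e); exists k.
Qed.

Lemma glt_0 a : ~~ lt a 0%MM.
Proof.
rewrite /grevlex_lt mdeg0 ltn0 /=; apply/negP => /andP[/eqP/eqP]; rewrite mdeg_eq0 => /eqP ->.
by case/existsP => k; rewrite mnm0E ltnn.
Qed.

Lemma lm_spec (R : ringType) (p : {mpoly R[s]}) : p != 0 ->
  grevlex_lm p \in msupp p /\
  forall a, a \in msupp p -> a = grevlex_lm p \/ lt a (grevlex_lm p).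
Proof.
move=> nz; rewrite /grevlex_lm.
have H : forall l : seq 'X_{1..s},
  (foldr (fun m acc => if lt acc m then m else acc) 0%MM l \in 0%MM :: l) /\
  forall a, a \in l -> a = foldr (fun m acc => if lt acc m then m else acc) 0%MM l
       \/ lt a (foldr (fun m acc => if lt acc m then m else acc) 0%MM l).
  elim=> [|m l [IH1 IH2]] /=; first by rewrite inE.
  set r := foldr _ _ l in IH1 IH2 *.
  case: ifP => hr.
    split; first by rewrite !inE eqxx orbT.
    move=> a; rewrite inE => /orP[/eqP ->|/IH2 [->|h]]; [by left|by right|].
    by right; apply: glt_trans hr.
  split; first by move: IH1; rewrite !inE => /orP[->|->]; rewrite ?orbT.
  move=> a; rewrite inE => /orP[/eqP ->|/IH2 //].
  case: (eqVneq m r) => [->|nmr]; first by left.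
  by move: (glt_total nmr); rewrite hr orbF; right.
have [H1 H2] := H (msupp p); split => //.
move: H1; rewrite inE => /orP[/eqP e|//].
have : msupp p != [::] by rewrite msupp_eq0.
case: (msupp p) H2 e => [//|a l] H2 e _.
case: (H2 a (mem_head _ _)) => [ea|h]; first by rewrite -ea mem_head.
by rewrite e (negbTE (glt_0 a)) in h.
Qed.

Lemma binom_lm (x y : 'X_{1..s}) : lt y x ->
  ('X_[x] - 'X_[y] : {mpoly 'F_3[s]}) != 0 /\ grevlex_lm ('X_[x] - 'X_[y] : {mpoly 'F_3[s]}) = x.
Proof.
move=> hyx; have nxy : x != y by apply: contraTneq hyx => ->; exact: glt_irr.
have cf z : ('X_[x] - 'X_[y] : {mpoly 'F_3[s]})@_z = (x == z)%:R - (y == z)%:R.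
  by rewrite mcoeffB !mcoeffX.
have xin : x \in msupp ('X_[x] - 'X_[y] : {mpoly 'F_3[s]}).
  rewrite mcoeff_msupp cf eqxx; case: (@eqP _ y x) => [e|_]; first by rewrite e eqxx in nxy.
  by rewrite subr0 oner_neq0.
have nz : ('X_[x] - 'X_[y] : {mpoly 'F_3[s]}) != 0.
  by apply: contraTneq xin => ->; rewrite msupp0.
split=> //; have [h1 h2] := lm_spec nz.
move: h1; rewrite mcoeff_msupp cf.
case: (@eqP _ x (grevlex_lm ('X_[x] - 'X_[y]))) => [<- //|nx].
case: (@eqP _ y (grevlex_lm ('X_[x] - 'X_[y]))) => [ey|_]; last by rewrite subrr eqxx.
move=> _; case: (h2 x xin) => [e|]; first by [].
by rewrite -ey => /glt_asym; rewrite hyx.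
Qed.
End Order.


Lemma F3_sq1 (z : 'F_3) : z != 0 -> z ^+ 2 = 1.
Proof. by case: z => [[|[|[|]]]] //= ?; rewrite ?expr2 /= => _; apply/val_inj. Qed.
Definition sgn (b : bool) : 'F_3 := if b then -1 else 1.
Lemma sgn_neq0 b : sgn b != 0.
Proof. by case: b. Qed.
Lemma pow_odd (z : 'F_3) e : z != 0 -> z ^+ e = z ^+ odd e.
Proof.
move=> nz; rewrite -{1}(odd_double_half e) exprD -mul2n exprM F3_sq1 //.
by rewrite expr1n mulr1.
Qed.

Section Graph.
Variables (n s : nat) (E : 'I_s -> {set 'I_n}).
Local Notation poly := {mpoly 'F_3[s]}.

Definition degv (a : 'X_{1..s}) (i : 'I_n) : nat := (\sum_(k | i \in E k) a k)%N.

Lemma prod_toric (R : comRingType) (y : 'I_n -> R) (a : 'X_{1..s}) :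
  \prod_(k < s) (\prod_(i in E k) y i) ^+ a k = \prod_i y i ^+ degv a i.
Proof.
rewrite (eq_bigr (fun k => \prod_i (if i \in E k then y i ^+ a k else 1))); last first.
  by move=> k _; rewrite -prodrXl big_mkcond.
rewrite exchange_big /=; apply: eq_bigr => i _.
by rewrite /degv -prodrXr [RHS]big_mkcond.
Qed.

Lemma mmap1_toric (y : 'I_n -> 'F_3) a :
  mmap1 (toric_point E y) a = \prod_i y i ^+ degv a i.
Proof. exact: prod_toric. Qed.

Lemma toric_neq0 (y : 'I_n -> 'F_3) k : (forall i, y i != 0) -> toric_point E y k != 0.
Proof. by move=> hy; apply/prodf_neq0 => i _. Qed.

Lemma homog_binom (a b : 'X_{1..s}) : mdeg a = mdeg b ->
  homogeneous ('X_[a] - 'X_[b] : poly).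
Proof.
move=> e; exists (mdeg a) => m; rewrite mcoeff_msupp mcoeffB !mcoeffX.
case: (eqVneq a m) => [->//|_]; case: (eqVneq b m) => [<-//|_].
by rewrite subrr eqxx.
Qed.

Lemma T_van f : T_set f -> vanishes_on_X E f.
Proof.
case=> i [j ->]; split.
  by rewrite !mpolyXn; apply: homog_binom; rewrite !mdegMn !mdeg1.
move=> x hx; rewrite mevalB !rmorphXn /= !mevalXU !F3_sq1 ?subrr //;
  exact: toric_neq0.
Qed.

Lemma E_van f : eulerian_binomial E f -> vanishes_on_X E f.
Proof.
case=> a [b [-> hmin h01 hdeg heul]]; split; first exact: homog_binom.
move=> x hx; rewrite mevalB !mevalX.
rewrite -!/(mmap1 _ _) !mmap1_toric; apply/eqP; rewrite subr_eq0; apply/eqP.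
apply: eq_bigr => i _; rewrite (pow_odd _ (hx i)) [RHS](pow_odd _ (hx i)).
suff -> : odd (degv a i) = odd (degv b i) by [].
have : (degv a i + degv b i)%N = #|[set k | (0 < a k + b k)%N && (i \in E k)]|.
  rewrite /degv -big_split /= -sum1dep_card [RHS]big_mkcondl /=.
  apply: eq_bigr => k _; move: (hmin k) (h01 k).
  by case: (a k) => [|[|?]]; case: (b k) => [|[|?]] //= _ [].
move/(congr1 odd); rewrite oddD => e.
move: (heul i); rewrite -e; by case: (odd (degv a i)); case: (odd (degv b i)).
Qed.

Definition Pt (x : {ffun 'I_n -> bool}) := toric_point E (fun i => sgn (x i)).
Definition hP x : 'I_s -> {poly 'F_3} := fun k => Pt x k *: 'X.
Definition mm x (g : poly) : {poly 'F_3} := mmap polyC (hP x) g.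
Definition chi (u : 'I_n -> bool) (x : {ffun 'I_n -> bool}) : 'F_3 :=
  \prod_i sgn (x i) ^+ u i.
Definition L u d (g : poly) : 'F_3 := \sum_x chi u x * (mm x g)`_d.

Lemma prod_scaleX (R : comRingType) (c : 'I_s -> R) (a : 'X_{1..s}) :
  \prod_(i < s) (c i *: ('X : {poly R})) ^+ a i = (\prod_(i < s) c i ^+ a i) *: 'X^(mdeg a).
Proof.
rewrite (eq_bigr (fun i => c i ^+ a i *: 'X ^+ a i)); last by move=> i _; rewrite exprZn.
by rewrite scaler_prod prodrXr mdegE.
Qed.

Lemma mmap1_hP x a : mmap1 (hP x) a = mmap1 (Pt x) a *: 'X^(mdeg a).
Proof. exact: prod_scaleX. Qed.

Lemma coef_mm x g j :
  (mm x g)`_j = \sum_(a <- msupp g | mdeg a == j) g@_a * mmap1 (Pt x) a.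
Proof.
rewrite /mm /mmap coef_sum [RHS]big_mkcond /=; apply: eq_bigr => a _.
rewrite mmap1_hP coefCM coefZ coefXn eq_sym.
by case: eqP; rewrite ?mulr1 ?mulr0.
Qed.

Lemma W_eq u a :
  \sum_x chi u x * mmap1 (Pt x) a =
  if [forall i, u i == odd (degv a i)] then 2%:R ^+ n else 0.
Proof.
rewrite (eq_bigr (fun x : {ffun 'I_n -> bool} =>
   \prod_i sgn (x i) ^+ (u i + degv a i)%N)); last first.
  move=> x _; rewrite /chi /Pt mmap1_toric -big_split /=.
  by apply: eq_bigr => i _; rewrite exprD.
rewrite -(bigA_distr_bigA (fun i b => sgn b ^+ (u i + degv a i)%N)) /=.
have H i : \sum_b sgn b ^+ (u i + degv a i)%N =
    if u i == odd (degv a i) then 2%:R else 0.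
  rewrite big_bool /= expr1n -signr_odd oddD.
  by case: (u i); case: (odd (degv a i)) => //=; rewrite ?expr1 ?expr0 // addNr.
under eq_bigr do rewrite H.
case: forallP => [h|h].
  by rewrite (eq_bigr (fun _ => 2%:R)) ?prodr_const ?card_ord // => i _; rewrite h.
have /existsP[i hi] : [exists i, u i != odd (degv a i)] by rewrite -negb_forall; apply/forallP.
by apply/eqP/prodf_eq0; exists i => //; rewrite (negbTE hi).
Qed.

Lemma mmM x p q : mm x (p * q) = mm x p * mm x q.
Proof. exact: (mmap_is_multiplicative (hP x) polyC).1. Qed.

Lemma L_D u d p q : L u d (p + q) = L u d p + L u d q.
Proof.
rewrite /L -big_split /=; apply: eq_bigr => x _.
by rewrite /mm mmapD coefD mulrDr.
Qed.

Lemma L_0 u d : L u d 0 = 0.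
Proof. by rewrite /L big1 // => x _; rewrite /mm mmap0 coef0 mulr0. Qed.

Lemma L_sum u d k (F : 'I_k -> poly) : L u d (\sum_(i < k) F i) = \sum_(i < k) L u d (F i).
Proof. exact: (big_morph _ (L_D u d) (L_0 u d)). Qed.

Definition Wc u a : 'F_3 := if [forall i, u i == odd (degv a i)] then 2%:R ^+ n else 0.

Lemma L_formula u d g :
  L u d g = \sum_(a <- msupp g | mdeg a == d) g@_a * Wc u a.
Proof.
rewrite /L (eq_bigr (fun x => \sum_(a <- msupp g | mdeg a == d) chi u x * (g@_a * mmap1 (Pt x) a))); last first.
  by move=> x _; rewrite coef_mm mulr_sumr.
rewrite exchange_big /=; apply: eq_bigr => a _.
rewrite /Wc -W_eq mulr_sumr; apply: eq_bigr => x _; by rewrite mulrCA.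
Qed.

Lemma mm_van x h : vanishes_on_X E h -> mm x h = 0.
Proof.
case=> [[e he] hv]; rewrite /mm /mmap.
rewrite (eq_big_seq (fun a => (h@_a * mmap1 (Pt x) a) *: 'X^e)); last first.
  move=> a ha; rewrite mmap1_hP (he a ha) -mul_polyC -mul_polyC polyCM mulrA.
  by [].
rewrite -scaler_suml.
have -> : \sum_(a <- msupp h) h@_a * mmap1 (Pt x) a = meval (Pt x) h by rewrite mevalE.
by rewrite hv ?scale0r // => i; exact: sgn_neq0.
Qed.

Lemma L_van u d c h : vanishes_on_X E h -> L u d (c * h) = 0.
Proof.
move=> hh; rewrite /L big1 // => x _.
by rewrite mmM (mm_van x hh) mulr0 coef0 mulr0.
Qed.

Lemma L_ts2 u d c (l : 'I_s) :
  L u d (c * 'X_l ^+ 2) = if (d < 2)%N then 0 else L u (d - 2) c.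
Proof.
have E1 x : mm x ('X_l ^+ 2) = 'X^2.
  rewrite expr2 mmM /mm mmapX mmap1U /hP -expr2 exprZn F3_sq1 ?scale1r //.
  by apply: toric_neq0 => i; exact: sgn_neq0.
have E2 x : (mm x (c * 'X_l ^+ 2))`_d = if (d < 2)%N then 0 else (mm x c)`_(d - 2).
  by rewrite mmM E1 coefMXn.
rewrite /L (eq_bigr _ (fun x _ => congr1 _ (E2 x))).
by case: ifP => _ //; rewrite big1 // => x _; rewrite mulr0.
Qed.

Definition good (m a : 'X_{1..s}) : Prop :=
  [/\ forall i, odd (degv a i) = odd (degv m i), (mdeg a <= mdeg m)%N,
      odd (mdeg a) = odd (mdeg m) & ((mdeg a < mdeg m)%N || grevlex_lt a m)].

Lemma two_pow_neq0 : (2%:R : 'F_3) ^+ n != 0.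
Proof. by rewrite expf_neq0. Qed.

Lemma L_contra (l : 'I_s) (f : poly) :
  ideal_gen (fun g : poly => IX E g \/ g = 'X_l ^+ 2) f -> f != 0 ->
  (forall a, a \in msupp f -> ~ good (grevlex_lm f) a) ->
  (forall a, ~ good (grevlex_lm f) a) -> False.
Proof.
move=> hf nzf _ hng.
set m := grevlex_lm f; set d := mdeg m.
pose u i := odd (degv m i).
have [hm hmax] := lm_spec nzf.
have L0 : L u d f = 0.
  case: hf => k [c [g [hg ->]]]; rewrite L_sum big1 // => i _.
  case: (hg i) => [[k' [c' [h [hh ->]]]]|->].
    rewrite mulr_sumr L_sum big1 // => j _.
    by rewrite mulrA L_van.
  rewrite L_ts2; case: ifP => // hd2.
  rewrite L_formula big1_seq // => a /andP[/eqP ha _].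
  rewrite /Wc; case: forallP => [hu|]; last by rewrite mulr0.
  exfalso; apply: (hng a); split.
  - by move=> i0; apply/esym/eqP; exact: (hu i0).
  - by rewrite ha leq_subr.
  - have h2 : (2 <= d)%N by rewrite leqNgt hd2.
    rewrite ha; have -> : odd d = odd (d - 2 + 2) by rewrite subnK.
    by rewrite oddD addbF.
  - have h2 : (2 <= d)%N by rewrite leqNgt hd2.
    by rewrite ha ltn_subrL /= (leq_trans _ h2).
have : L u d f != 0.
  rewrite L_formula big_mkcond /= (bigD1_seq m) ?msupp_uniq //= eqxx.
  rewrite big1 ?addr0.
    rewrite /Wc; case: forallP => [_|h]; last by exfalso; apply: h => i.
    by rewrite mulf_neq0 // -?mcoeff_msupp // two_pow_neq0.
  move=> a nam; case: ifP => // /eqP da.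
  rewrite /Wc; case: forallP => [hu|]; last by rewrite mulr0.
  case: (boolP (a \in msupp f)) => [ha|]; last first.
    by rewrite mcoeff_msupp negbK => /eqP ->; rewrite mul0r.
  exfalso; apply: (hng a); split.
  - by move=> i0; apply/esym/eqP; exact: (hu i0).
  - by rewrite da.
  - by rewrite da.
  - by case: (hmax a ha) => [e|->]; [rewrite e eqxx in nam | rewrite orbT].
by rewrite L0 eqxx.
Qed.

Definition mI (X : {set 'I_s}) : 'X_{1..s} := [multinom (i \in X : nat) | i < s].

Lemma mI_E X j : mI X j = (j \in X).
Proof. exact: mnmE. Qed.

Lemma mdeg_mI X : mdeg (mI X) = #|X|.
Proof.
rewrite mdegE -sum1_card [RHS]big_mkcond /=; apply: eq_bigr => i _.
by rewrite mI_E; case: (i \in X).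
Qed.

Lemma card_odd (a : 'X_{1..s}) : #|[set k | odd (a k)]| = (\sum_k (odd (a k) : nat))%N.
Proof.
rewrite -sum1dep_card big_mkcond /=; apply: eq_bigr => i _.
by case: (odd (a i)).
Qed.

Lemma card_odd_le (a : 'X_{1..s}) : (#|[set k | odd (a k)]| <= mdeg a)%N.
Proof.
rewrite card_odd mdegE; apply: leq_sum => i _.
by case: (a i) => [|[|k]] //=; case: (odd k).
Qed.

Lemma card_odd_odd (a : 'X_{1..s}) : odd #|[set k | odd (a k)]| = odd (mdeg a).
Proof. by rewrite mdegE odd_sum_card. Qed.

Lemma card_odd_eq (a : 'X_{1..s}) : #|[set k | odd (a k)]| = mdeg a ->
  forall k, (a k <= 1)%N.
Proof.
move=> e k; move: e; apply: contra_eqT => hk; rewrite -ltnNge in hk.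
rewrite card_odd mdegE (bigD1 k) //= [X in _ != X](bigD1 k) //=.
have h1 : (\sum_(i | i != k) (odd (a i) : nat) <= \sum_(i | i != k) a i)%N.
  apply: leq_sum => i _; by case: (a i) => [|[|j]] //=; case: (odd j).
have h2 : (odd (a k) < a k)%N.
  by move: hk; case: (a k) => [|[|j]] //= _; case: (odd j).
rewrite neq_ltn; apply/orP; left; exact: leq_trans (leq_add h2 h1) _.
Qed.

Lemma good_binom (m a : 'X_{1..s}) : (forall k, m k <= 1)%N -> good m a ->
  exists g : poly, [/\ eulerian_binomial E g, g != 0 & (grevlex_lm g <= m)%MM].
Proof.
move=> sqf [hpar hdeg hodd hlt].
set M := [set k | odd (m k)]; set A := [set k | odd (a k)].
have cM : #|M| = mdeg m.
  by apply/eqP; rewrite eqn_leq card_odd_le card_odd mdegE; apply: leq_sum => i _;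
     move: (sqf i); case: (m i) => [|[|]].
have hA : (#|A| <= mdeg a)%N := card_odd_le a.
have Hpar v : odd #|M :&: [set k | v \in E k]| = odd #|A :&: [set k | v \in E k]|.
  have e (b : 'X_{1..s}) : odd (degv b v) = odd #|[set k | odd (b k)] :&: [set k | v \in E k]|.
    rewrite /degv odd_sum_card; congr odd; apply: eq_card => k; rewrite !inE andbC //.
  by rewrite -!e hpar.
have [al [be [k [alM dis cab eul [kbe above]]]]] : exists al be : {set 'I_s}, exists k : 'I_s,
    [/\ al \subset M, [disjoint al & be], #|al| = #|be|,
        (forall v, ~~ odd #|(al :|: be) :&: [set k | v \in E k]|)
        & (k \in be /\ forall j : 'I_s, (k < j)%N -> j \notin al :|: be)].
  apply: comb => //.
  - by rewrite cM; exact: leq_trans hA hdeg.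
  - by rewrite cM card_odd_odd.
  - case: (ltnP (mdeg a) (mdeg m)) => [hl|hge]; first by left; rewrite cM; exact: leq_ltn_trans hA hl.
    have hl : grevlex_lt a m by move: hlt; rewrite ltnNge hge.
    have ed : mdeg a = mdeg m by apply/eqP; rewrite eqn_leq hdeg hge.
    have [lt|] := ltnP #|A| (mdeg a); first by left; rewrite cM -ed.
    move=> ge; have ea : #|A| = mdeg a by apply/eqP; rewrite eqn_leq hA ge.
    have a1 := card_odd_eq ea.
    case/(glt_sameP ed): hl => k [hk hj]; right; exists k.
      rewrite !inE; move: (a1 k) (sqf k) hk; case: (a k) => [|[|]] //; case: (m k) => [|[|]] //.
    by move=> j /hj e; rewrite !inE e.
have nab : [disjoint al & be] := dis.
have hlt' : grevlex_lt (mI be) (mI al).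
  apply/(glt_sameP (etrans (mdeg_mI be) (etrans (esym cab) (esym (mdeg_mI al))))).
  exists k; split.
    rewrite !mI_E kbe; have := disjointFl nab kbe; by move=> ->.
  move=> j hj; rewrite !mI_E; move: (above j hj); rewrite inE negb_or => /andP[/negbTE -> /negbTE ->].
  by [].
have [nz lmg] := binom_lm hlt'.
exists ('X_[mI al] - 'X_[mI be]); split => //.
- exists (mI al), (mI be); split => //.
  + move=> i; rewrite !mI_E; case: (boolP (i \in al)) => hi; last by rewrite min0n.
    by rewrite (disjointFr nab hi).
  + by move=> i; rewrite !mI_E; split; case: (_ \in _).
  + by rewrite !mdeg_mI.
  + move=> v; have := eul v; congr (~~ odd _); apply: eq_card => j.
    by rewrite !inE !mI_E; case: (j \in al); case: (j \in be); case: (v \in E j).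
- rewrite lmg; apply/mnm_lepP => i; rewrite mI_E.
  case: (boolP (i \in al)) => // /(subsetP alM); rewrite inE.
  by case: (m i).
Qed.
End Graph.

Lemma X2_lm (s : nat) (l : 'I_s) :
  grevlex_lm ('X_l ^+ 2 : {mpoly 'F_3[s]}) = (U_(l) *+ 2)%MM.
Proof.
by rewrite /grevlex_lm mpolyXn msuppX /= /grevlex_lt mdeg0 mdegMn mdeg1.
Qed.

Theorem proposition2p3 (n s : nat) (hs : (0 < s)%N) (E : 'I_s -> {set 'I_n}) :
  simple_graph_edges E ->
  grevlex_groebner
    (fun f : {mpoly 'F_3[s]} =>
       T_set f \/ eulerian_binomial E f \/ f = 'X_(last_var hs) ^+ 2)
    (ideal_gen (fun f : {mpoly 'F_3[s]} =>
                  IX E f \/ f = 'X_(last_var hs) ^+ 2)).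
Proof.
move=> _; split.
  move=> g hg; exists 1%N, (fun _ => 1), (fun _ => g); split; last by rewrite big_ord1 mul1r.
  move=> _; case: hg => [hT|[hE|->]]; last by right.
    left; exists 1%N, (fun _ => 1), (fun _ => g); split; last by rewrite big_ord1 mul1r.
    by move=> _; apply: T_van.
  left; exists 1%N, (fun _ => 1), (fun _ => g); split; last by rewrite big_ord1 mul1r.
  by move=> _; apply: E_van.
move=> f hf nzf.
set l := last_var hs.
case: (boolP [forall k, grevlex_lm f k <= 1]%N) => [/forallP sqf|].
  case: (classic (exists a, good E (grevlex_lm f) a)) => [[a ga]|nga].
    have [g [eg nzg le]] := good_binom sqf ga.
    by exists g; split => //; right; left.
  exfalso; apply: (L_contra hf nzf) => [a _ ga|a ga]; apply: nga; by exists a.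
rewrite negb_forall => /existsP[k hk]; rewrite -ltnNge in hk.
case: (eqVneq k l) => [ekl|nkl].
  exists ('X_l ^+ 2); split; [by right; right| |].
    by rewrite mpolyXn -msupp_eq0 msuppX.
  rewrite X2_lm; apply/mnm_lepP => i; rewrite mulmnE mnm1E.
  by case: (eqVneq l i) => [<-|] //=; rewrite -ekl.
have hlt : grevlex_lt (U_(l) *+ 2)%MM (U_(k) *+ 2)%MM.
  apply/glt_sameP; first by rewrite !mdegMn !mdeg1.
  exists l; split.
    by rewrite !mulmnE !mnm1E eqxx (negbTE nkl).
  move=> j hj; exfalso; move: hj (ltn_ord j); rewrite /l /last_var /=; lia.
have [nz lmg] := binom_lm hlt.
exists ('X_k ^+ 2 - 'X_l ^+ 2); split.
- by left; exists k, l.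
- by rewrite !mpolyXn.
- rewrite !mpolyXn lmg; apply/mnm_lepP => i; rewrite mulmnE mnm1E.
  by case: (eqVneq k i) => [<-|].
Qed.
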